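(* For all $1\le i\le\ell$, $$\Delta(X_i)=X_i\otimes N_{i,i-1}+\hat K^{-1}\otimes X_i+q^{-\frac12}(q-q^{-1})\sum_{j=i}^{\ell-1}X_{j+1}\otimes N_{i,j}M_{i,j}^*.$$
   Context: $0<q<1$, $\ell\ge1$. $U_q(\mathfrak{su}(\ell+1))$: Hopf $*$-algebra generated by $K_i^{\pm1},E_i,F_i=E_i^*$, $K_i^*=K_i$ ($1\le i\le\ell$) with the standard Drinfeld–Jimbo relations ($K_iE_iK_i^{-1}=qE_i$, $K_iE_jK_i^{-1}=q^{-1/2}E_j$ for $|i-j|=1$, $=E_j$ for $|i-j|>1$, $[E_i,F_j]=\delta_{ij}\frac{K_i^2-K_i^{-2}}{q-q^{-1}}$, quantum Serre), $\Delta(K_i)=K_i\otimes K_i$, $\Delta(E_i)=E_i\otimes K_i+K_i^{-1}\otimes E_i$, enlarged by the grouplike element $\hat K=(K_1K_2^2\cdots K_\ell^\ell)^{2/(\ell+1)}$. $[a,b]_q=ab-q^{-1}ba$, $M_{ii}=E_i$, $M_{jk}=[E_j,M_{j+1,k}]_q$ ($j<k$), $N_{jk}=(K_j\cdots K_\ell)(K_{k+1}\cdots K_\ell)\hat K^{-1}$, $X_i=N_{i\ell}M_{i\ell}^*$. *)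

(* Defs.v *)
From HB Require Import structures.
From mathcomp Require Import all_boot all_order all_algebra.
Set Implicit Arguments. Unset Strict Implicit. Unset Printing Implicit Defensive.
Import Order.TTheory GRing.Theory Num.Theory.
Local Open Scope ring_scope.

Section UqDefs.
Variables (R : rcfType) (A : algType R).

Definition qcomm (q : R) (a b : A) : A := a * b - q^-1 *: (b * a).

(* Mrec E q d j = M_{j, j+d} *)
Fixpoint Mrec (E : nat -> A) (q : R) (d j : nat) : A :=
  match d with
  | 0 => E j
  | d'.+1 => qcomm q (E j) (Mrec E q d' j.+1)
  end.

Definition Mel (E : nat -> A) (q : R) (j k : nat) : A := Mrec E q (k - j) j.

Definition Nel (K : nat -> A) (hatKinv : A) (ell j k : nat) : A :=
  (\prod_(j <= m < ell.+1) K m) * (\prod_(k.+1 <= m < ell.+1) K m) * hatKinv.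

Definition Xel (st : A -> A) (E K : nat -> A) (hatKinv : A) (q : R) (ell i : nat) : A :=
  Nel K hatKinv ell i ell * st (Mel E q i ell).

(* st is an (R-linear, since R is real) anti-multiplicative involution *)
Definition is_star (st : A -> A) : Prop :=
  [/\ forall a, st (st a) = a,
      forall a b, st (a + b) = st a + st b,
      forall (c : R) a, st (c *: a) = c *: st a,
      forall a b, st (a * b) = st b * st a &
      st 1 = 1].

(* Defining relations of U_q(su(l+1)) enlarged by \hat K, indices 1..l.
   F_i = E_i^*. *)
Definition Uq_relations (st : A -> A) (q : R) (ell : nat)
  (K Kinv E : nat -> A) (hatK hatKinv : A) : Prop :=
  let F := fun i => st (E i) in
  [/\ (forall i, (1 <= i <= ell)%N -> K i * Kinv i = 1 /\ Kinv i * K i = 1),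
      (forall i, (1 <= i <= ell)%N -> st (K i) = K i),
      (forall i j, (1 <= i <= ell)%N -> (1 <= j <= ell)%N -> K i * K j = K j * K i) /\
      (forall i j, (1 <= i <= ell)%N -> (1 <= j <= ell)%N ->
         K i * E j * Kinv i =
           if (i == j)%N then q *: E j
           else if `|i - j|%N == 1%N then (Num.sqrt q)^-1 *: E j
           else E j),
      (forall i j, (1 <= i <= ell)%N -> (1 <= j <= ell)%N ->
         E i * F j - F j * E i =
           if (i == j)%N then (q - q^-1)^-1 *: (K i ^+ 2 - Kinv i ^+ 2) else 0) &
      (forall i j, (1 <= i <= ell)%N -> (1 <= j <= ell)%N -> `|i - j|%N == 1%N ->
         E i ^+ 2 * E j - (q + q^-1) *: (E i * E j * E i) + E j * E i ^+ 2 = 0) /\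
      (forall i j, (1 <= i <= ell)%N -> (1 <= j <= ell)%N -> (1 < `|i - j|)%N ->
         E i * E j = E j * E i)].

(* Relations satisfied by \hat K = (K_1 K_2^2 ... K_l^l)^{2/(l+1)} *)
Definition hatK_relations (st : A -> A) (q : R) (ell : nat)
  (K Kinv E : nat -> A) (hatK hatKinv : A) : Prop :=
  [/\ hatK * hatKinv = 1 /\ hatKinv * hatK = 1,
      st hatK = hatK,
      (forall i, (1 <= i <= ell)%N -> hatK * K i = K i * hatK),
      (forall j, (1 <= j <= ell)%N ->
         hatK * E j * hatKinv = if (j == ell)%N then q *: E j else E j) &
      hatK ^+ ell.+1 = (\prod_(1 <= m < ell.+1) K m ^+ m) ^+ 2].
End UqDefs.

Section Tensor.
Variables (R : rcfType) (A B : algType R).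

(* tens a b plays the role of a ⊗ b in the algebra B = A ⊗ A *)
Definition is_tensor_map (tens : A -> A -> B) : Prop :=
  [/\ forall a a' b, tens (a + a') b = tens a b + tens a' b,
      forall a b b', tens a (b + b') = tens a b + tens a b',
      forall (c : R) a b, tens (c *: a) b = c *: tens a b,
      (forall (c : R) a b, tens a (c *: b) = c *: tens a b) /\
      (forall a b c d, tens a b * tens c d = tens (a * c) (b * d)) &
      tens 1 1 = 1].

(* Delta is the coproduct: an R-linear algebra morphism A -> A ⊗ A with the
   prescribed values on generators (Delta(F_i) follows from Delta being a
   *-homomorphism). *)
Definition is_coproduct (st : A -> A) (ell : nat) (tens : A -> A -> B)
  (Delta : {rmorphism A -> B}) (K Kinv E : nat -> A) (hatK : A) : Prop :=
  [/\ (forall (c : R) a, Delta (c *: a) = c *: Delta a),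
      (forall i, (1 <= i <= ell)%N -> Delta (K i) = tens (K i) (K i)),
      Delta hatK = tens hatK hatK,
      (forall i, (1 <= i <= ell)%N ->
         Delta (E i) = tens (E i) (K i) + tens (Kinv i) (E i)) &
      (forall i, (1 <= i <= ell)%N ->
         Delta (st (E i)) = tens (st (E i)) (K i) + tens (Kinv i) (st (E i)))].
End Tensor.

(* Main.v *)
Require Import Defs.
From HB Require Import structures.
From mathcomp Require Import all_boot all_order all_algebra.
From mathcomp Require Import zify ring.
Import Order.TTheory GRing.Theory Num.Theory.
Set Implicit Arguments. Unset Strict Implicit. Unset Printing Implicit Defensive.
Local Open Scope ring_scope.

Section Gen.
Variables (R : rcfType) (A : algType R).

Definition comm_w (y x : A) (w : R) := y * x = w *: (x * y).

Lemma comm_w1 y x : comm_w y x 1 <-> GRing.comm y x.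
Proof. by rewrite /comm_w scale1r. Qed.

Lemma comm_w_mul y x1 x2 w1 w2 :
  comm_w y x1 w1 -> comm_w y x2 w2 -> comm_w y (x1 * x2) (w1 * w2).
Proof.
rewrite /comm_w => H1 H2.
by rewrite mulrA H1 -scalerAl -(mulrA x1 y x2) H2 -scalerAr mulrA scalerA.
Qed.

Lemma comm_w_mull y1 y2 x w1 w2 :
  comm_w y1 x w1 -> comm_w y2 x w2 -> comm_w (y1 * y2) x (w1 * w2).
Proof.
rewrite /comm_w => H1 H2.
by rewrite -(mulrA y1 y2 x) H2 -scalerAr (mulrA y1 x y2) H1 -scalerAl scalerA mulrC mulrA.
Qed.

Lemma comm_w_qcomm (q : R) y x1 x2 w1 w2 :
  comm_w y x1 w1 -> comm_w y x2 w2 -> comm_w y (qcomm q x1 x2) (w1 * w2).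
Proof.
move=> H1 H2.
have E1 := comm_w_mul H1 H2. have E2 := comm_w_mul H2 H1.
move: E1 E2; rewrite /comm_w /qcomm => E1 E2.
rewrite mulrBr mulrBl -scalerAr E1 E2 -scalerAl scalerBr !scalerA.
by rewrite [w2 * w1]mulrC [q^-1 * _]mulrC.
Qed.

Lemma comm_w_sym y x w : w != 0 -> comm_w y x w -> comm_w x y w^-1.
Proof.
rewrite /comm_w => w0 H; by rewrite H scalerA mulVf // scale1r.
Qed.

Lemma inv_comm (x x' y : A) : x * x' = 1 -> x' * x = 1 ->
  GRing.comm x y -> GRing.comm x' y.
Proof.
move=> H1 H2 C; rewrite /GRing.comm.
by rewrite -[x' * y]mulr1 -H1 mulrA -(mulrA x') -C mulrA H2 mul1r.
Qed.

Lemma comm_w_prod_r y (f : nat -> A) a1 a2 :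
  (forall b, (a1 <= b < a2)%N -> GRing.comm y (f b)) ->
  GRing.comm y (\prod_(a1 <= b < a2) f b).
Proof.
move=> H; rewrite big_nat_cond; apply: commr_prod => b /andP[Hb _]; exact: H.
Qed.

Lemma comm_w_prod_l y (f : nat -> A) a1 a2 :
  (forall b, (a1 <= b < a2)%N -> GRing.comm (f b) y) ->
  GRing.comm (\prod_(a1 <= b < a2) f b) y.
Proof.
move=> H; apply: commr_sym; apply: comm_w_prod_r => b Hb.
exact/commr_sym/H.
Qed.


Lemma prodw_l (f : nat -> A) x (w : nat -> R) a1 a2 :
  (forall b, (a1 <= b < a2)%N -> comm_w (f b) x (w b)) ->
  comm_w (\prod_(a1 <= b < a2) f b) x (\prod_(a1 <= b < a2) w b).
Proof.
move=> H; rewrite big_nat_cond [X in comm_w _ _ X]big_nat_cond.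
apply: (big_ind2 (fun y c => comm_w y x c)).
- by rewrite /comm_w mul1r mulr1 scale1r.
- by move=> ? ? ? ? ? ?; apply: comm_w_mull.
- by move=> b /andP[hb _]; apply: H.
Qed.

Lemma prodw_r (f : nat -> A) y (w : nat -> R) a1 a2 :
  (forall b, (a1 <= b < a2)%N -> comm_w y (f b) (w b)) ->
  comm_w y (\prod_(a1 <= b < a2) f b) (\prod_(a1 <= b < a2) w b).
Proof.
move=> H; rewrite big_nat_cond [X in comm_w _ _ X]big_nat_cond.
apply: (big_ind2 (fun x c => comm_w y x c)).
- by rewrite /comm_w mul1r mulr1 scale1r.
- by move=> ? ? ? ? ? ?; apply: comm_w_mul.
- by move=> b /andP[hb _]; apply: H.
Qed.

Lemma prod_single (c : R) a1 a2 b0 : (a1 <= b0 < a2)%N ->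
  \prod_(a1 <= b < a2) (if (b == b0)%N then c else 1) = c.
Proof.
move=> h; rewrite (big_cat_nat _ (n:=b0)); [|lia|lia].
rewrite (big_ltn (m:=b0)); last by lia.
rewrite eqxx big_nat_cond big1; last first.
  by move=> b /andP[/andP[h1 h2] _]; rewrite ifN //; lia.
rewrite Monoid.mul1m big_nat_cond big1 ?Monoid.mulm1 //.
by move=> b /andP[/andP[h1 h2] _]; rewrite ifN //; lia.
Qed.

Lemma prodw_single_l (f : nat -> A) x a1 a2 b0 c : (a1 <= b0 < a2)%N ->
  comm_w (f b0) x c ->
  (forall b, (a1 <= b < a2)%N -> b != b0 -> comm_w (f b) x 1) ->
  comm_w (\prod_(a1 <= b < a2) f b) x c.
Proof.
move=> h H0 H; rewrite -(prod_single c h); apply: prodw_l => b hb.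
by case: eqP => [->//|/eqP ne]; apply: H.
Qed.

Lemma prodw_single_r (f : nat -> A) y a1 a2 b0 c : (a1 <= b0 < a2)%N ->
  comm_w y (f b0) c ->
  (forall b, (a1 <= b < a2)%N -> b != b0 -> comm_w y (f b) 1) ->
  comm_w y (\prod_(a1 <= b < a2) f b) c.
Proof.
move=> h H0 H; rewrite -(prod_single c h); apply: prodw_r => b hb.
by case: eqP => [->//|/eqP ne]; apply: H.
Qed.

End Gen.

Section Tens.
Variables (R : rcfType) (A B : algType R) (tens : A -> A -> B) (q : R).
Hypothesis Ht : is_tensor_map tens.

Lemma tensB1 a a' b : tens (a - a') b = tens a b - tens a' b.
Proof.
case: Ht => H1 _ H3 _ _.
by rewrite H1 -scaleN1r H3 scaleN1r.
Qed.

Lemma tensB2 a b b' : tens a (b - b') = tens a b - tens a b'.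
Proof.
case: Ht => _ H2 _ [H4 _] _.
by rewrite H2 -scaleN1r H4 scaleN1r.
Qed.

Lemma tensM a b c d : tens a b * tens c d = tens (a * c) (b * d).
Proof. by case: Ht => _ _ _ [_ ->]. Qed.

Lemma tensZ1 (c : R) a b : tens (c *: a) b = c *: tens a b.
Proof. by case: Ht. Qed.
Lemma tensZ2 (c : R) a b : tens a (c *: b) = c *: tens a b.
Proof. by case: Ht => _ _ _ [-> _]. Qed.

Lemma qcB_L1 a b c d : d * b = b * d ->
  qcomm q (tens a b) (tens c d) = tens (qcomm q a c) (b * d).
Proof.
move=> H; rewrite /qcomm !tensM H tensB1 tensZ1 //.
Qed.

Lemma qcB_L2 a b c d : c * a = a * c ->
  qcomm q (tens a b) (tens c d) = tens (a * c) (qcomm q b d).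
Proof.
move=> H; rewrite /qcomm !tensM H tensB2 tensZ2 //.
Qed.

Lemma qcB_L3 a b c d (al be : R) : c * a = al *: (a * c) -> d * b = be *: (b * d) ->
  qcomm q (tens a b) (tens c d) = (1 - q^-1 * (al * be)) *: tens (a * c) (b * d).
Proof.
move=> H1 H2; rewrite /qcomm !tensM H1 H2 tensZ1 tensZ2 !scalerA.
by rewrite scalerBl scale1r.
Qed.

Lemma qc_addl (x1 x2 y : B) : qcomm q (x1 + x2) y = qcomm q x1 y + qcomm q x2 y.
Proof. by rewrite /qcomm mulrDl mulrDr scalerDr opprD addrACA. Qed.
Lemma qc_addr (x y1 y2 : B) : qcomm q x (y1 + y2) = qcomm q x y1 + qcomm q x y2.
Proof. by rewrite /qcomm mulrDl mulrDr scalerDr opprD addrACA. Qed.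
Lemma qc_scalel (c : R) (x y : B) : qcomm q (c *: x) y = c *: qcomm q x y.
Proof. by rewrite /qcomm -scalerAl -scalerAr scalerBr !scalerA mulrC. Qed.
Lemma qc_suml (f : nat -> B) m n y :
  qcomm q (\sum_(m <= t < n) f t) y = \sum_(m <= t < n) qcomm q (f t) y.
Proof.
rewrite /qcomm mulr_suml mulr_sumr scaler_sumr -sumrB //.
Qed.
End Tens.

Section Main.
Variables (R : rcfType) (A B : algType R) (q : R) (ell : nat)
  (st : A -> A) (K Kinv E : nat -> A) (hatK hatKinv : A)
  (tens : A -> A -> B) (Delta : {rmorphism A -> B}).
Hypotheses (hq0 : 0 < q) (hq1 : q < 1) (hl : (1 <= ell)%N)
  (Hst : is_star st)
  (HU : Uq_relations st q ell K Kinv E hatK hatKinv)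
  (HH : hatK_relations st q ell K Kinv E hatK hatKinv)
  (Ht : is_tensor_map tens)
  (HD : is_coproduct st ell tens Delta K Kinv E hatK).

Local Notation F b := (st (E b)).
Local Notation s := (Num.sqrt q).
Local Notation G j k := (st (Mel E q j k)).
Local Notation PK a b := (\prod_(a <= m < b) K m).
Local Notation PKi a b := (\prod_(a <= m < b) Kinv m).

Lemma s_gt0 : 0 < s. Proof. by rewrite sqrtr_gt0. Qed.
Lemma s_neq0 : s != 0. Proof. by rewrite gt_eqF // s_gt0. Qed.
Lemma q_neq0 : q != 0. Proof. by rewrite gt_eqF. Qed.
Lemma ss : s * s = q. Proof. by rewrite -expr2 sqr_sqrtr // ltW. Qed.

Lemma stM a b : st (a * b) = st b * st a. Proof. by case: Hst. Qed.
Lemma st1 : st 1 = 1. Proof. by case: Hst. Qed.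
Lemma stZ (c : R) a : st (c *: a) = c *: st a. Proof. by case: Hst. Qed.
Lemma stD a b : st (a + b) = st a + st b. Proof. by case: Hst. Qed.
Lemma stB a b : st (a - b) = st a - st b.
Proof. by rewrite stD -scaleN1r stZ scaleN1r. Qed.

Lemma st_qcomm a b : st (qcomm q a b) = qcomm q (st b) (st a).
Proof. by rewrite /qcomm stB stZ !stM. Qed.

Lemma KKi a : (1 <= a <= ell)%N -> K a * Kinv a = 1.
Proof. by case: HU => H _ _ _ _ /H []. Qed.
Lemma KiK a : (1 <= a <= ell)%N -> Kinv a * K a = 1.
Proof. by case: HU => H _ _ _ _ /H []. Qed.
Lemma stK a : (1 <= a <= ell)%N -> st (K a) = K a.
Proof. by case: HU => _ H _ _ _ /H. Qed.
Lemma Kc a b : (1 <= a <= ell)%N -> (1 <= b <= ell)%N -> GRing.comm (K a) (K b).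
Proof. by case: HU => _ _ [H _] _ _; apply: H. Qed.
Lemma KKic a b : (1 <= a <= ell)%N -> (1 <= b <= ell)%N -> GRing.comm (K a) (Kinv b).
Proof.
move=> ha hb; apply: commr_sym; apply: (inv_comm (KKi hb) (KiK hb)); exact: Kc.
Qed.
Lemma KiKc a b : (1 <= a <= ell)%N -> (1 <= b <= ell)%N -> GRing.comm (Kinv a) (K b).
Proof. by move=> ha hb; apply: commr_sym; apply: KKic. Qed.
Lemma Kic a b : (1 <= a <= ell)%N -> (1 <= b <= ell)%N -> GRing.comm (Kinv a) (Kinv b).
Proof.
move=> ha hb; apply: (inv_comm (KKi ha) (KiK ha)); exact: KKic.
Qed.
Lemma hKKi : hatK * hatKinv = 1. Proof. by case: HH => [[]]. Qed.
Lemma hKiK : hatKinv * hatK = 1. Proof. by case: HH => [[]]. Qed.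
Lemma hKiKc a : (1 <= a <= ell)%N -> GRing.comm hatKinv (K a).
Proof.
move=> ha; apply: (inv_comm hKKi hKiK). by case: HH => _ _ H _ _; apply: H.
Qed.
Lemma hKiKic a : (1 <= a <= ell)%N -> GRing.comm hatKinv (Kinv a).
Proof.
move=> ha; apply: commr_sym; apply: (inv_comm (KKi ha) (KiK ha)).
exact/commr_sym/hKiKc.
Qed.

Lemma st_inv x x' : st x = x -> x * x' = 1 -> x' * x = 1 -> st x' = x'.
Proof.
move=> Hx H1 H2.
have H3 : st x' * x = 1 by rewrite -Hx -stM H1 st1.
by rewrite -[st x']mulr1 -H1 mulrA H3 mul1r.
Qed.
Lemma stKi a : (1 <= a <= ell)%N -> st (Kinv a) = Kinv a.
Proof. move=> ha; exact: (st_inv (stK ha) (KKi ha) (KiK ha)). Qed.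
Lemma sthKi : st hatKinv = hatKinv.
Proof. by apply: (st_inv _ hKKi hKiK); case: HH. Qed.

Definition cw (a b : nat) : R :=
  if (a == b)%N then q else if `|a - b|%N == 1%N then (Num.sqrt q)^-1 else 1.

Lemma cw_neq0 a b : cw a b != 0.
Proof.
rewrite /cw; case: ifP => _; first exact: q_neq0.
case: ifP => _; last exact: oner_neq0. by rewrite invr_eq0 s_neq0.
Qed.

Lemma KEK a b : (1 <= a <= ell)%N -> (1 <= b <= ell)%N ->
  K a * E b * Kinv a = cw a b *: E b.
Proof.
move=> ha hb; case: HU => _ _ [_ H] _ _; rewrite H // /cw.
by case: ifP => // _; case: ifP => // _; rewrite scale1r.
Qed.

Lemma KiF a b : (1 <= a <= ell)%N -> (1 <= b <= ell)%N ->
  comm_w (Kinv a) (F b) (cw a b).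
Proof.
move=> ha hb; have H := KEK ha hb.
have H2 : Kinv a * F b * K a = cw a b *: F b.
  by rewrite -(stKi ha) -(stK ha) -!stM mulrA H stZ.
by rewrite /comm_w -[Kinv a * F b]mulr1 -(KKi ha) mulrA H2 scalerAl.
Qed.

Lemma FK a b : (1 <= a <= ell)%N -> (1 <= b <= ell)%N ->
  comm_w (F b) (K a) (cw a b).
Proof.
move=> ha hb; have H := KiF ha hb; move: H; rewrite /comm_w => H.
by rewrite -[F b * K a]mul1r -(KKi ha) -mulrA (mulrA (Kinv a)) H -scalerAl
  -scalerAr -(mulrA (F b)) KiK // mulr1.
Qed.

Lemma KF a b : (1 <= a <= ell)%N -> (1 <= b <= ell)%N ->
  comm_w (K a) (F b) (cw a b)^-1.
Proof. move=> ha hb; apply: comm_w_sym; [exact: cw_neq0|exact: FK]. Qed.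
Lemma FKi a b : (1 <= a <= ell)%N -> (1 <= b <= ell)%N ->
  comm_w (F b) (Kinv a) (cw a b)^-1.
Proof. move=> ha hb; apply: comm_w_sym; [exact: cw_neq0|exact: KiF]. Qed.

Lemma cw_nb a b : ((a == b.+1) || (b == a.+1))%N -> cw a b = s^-1.
Proof.
move=> h; rewrite /cw; have -> : (a == b)%N = false by apply/negbTE; lia.
by have -> : (`|a - b|%N == 1%N) by lia.
Qed.
Lemma cw_far a b : ((a.+1 < b) || (b.+1 < a))%N -> cw a b = 1.
Proof.
move=> h; rewrite /cw; have -> : (a == b)%N = false by apply/negbTE; lia.
by have -> : (`|a - b|%N == 1%N) = false by apply/negbTE; lia.
Qed.

Lemma hKiF b : (1 <= b < ell)%N -> GRing.comm hatKinv (F b).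
Proof.
move=> hb; case: HH => _ HsthK _ H _.
have H1 := H b ltac:(lia); rewrite ifN in H1; last by lia.
have H2 : hatKinv * F b * hatK = F b by rewrite -sthKi -HsthK -!stM mulrA H1.
by rewrite /GRing.comm -{2}H2 -!mulrA hKKi mulr1.
Qed.

Lemma FF a b : (1 <= a <= ell)%N -> (1 <= b <= ell)%N -> (1 < `|a - b|)%N ->
  GRing.comm (F a) (F b).
Proof.
move=> ha hb hab; case: HU => _ _ _ _ [_ H].
by rewrite /GRing.comm -!stM (H a b).
Qed.


Lemma KF_nb a b : (1 <= a <= ell)%N -> (1 <= b <= ell)%N ->
  ((a == b.+1) || (b == a.+1))%N -> comm_w (K a) (F b) s.
Proof. by move=> ha hb h; have := KF ha hb; rewrite cw_nb // invrK. Qed.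
Lemma KF_far a b : (1 <= a <= ell)%N -> (1 <= b <= ell)%N ->
  ((a.+1 < b) || (b.+1 < a))%N -> comm_w (K a) (F b) 1.
Proof. by move=> ha hb h; have := KF ha hb; rewrite cw_far // invr1. Qed.
Lemma KiF_nb a b : (1 <= a <= ell)%N -> (1 <= b <= ell)%N ->
  ((a == b.+1) || (b == a.+1))%N -> comm_w (Kinv a) (F b) s^-1.
Proof. by move=> ha hb h; have := KiF ha hb; rewrite cw_nb. Qed.
Lemma KiF_far a b : (1 <= a <= ell)%N -> (1 <= b <= ell)%N ->
  ((a.+1 < b) || (b.+1 < a))%N -> comm_w (Kinv a) (F b) 1.
Proof. by move=> ha hb h; have := KiF ha hb; rewrite cw_far. Qed.
Lemma FKi_nb a b : (1 <= a <= ell)%N -> (1 <= b <= ell)%N ->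
  ((a == b.+1) || (b == a.+1))%N -> comm_w (F b) (Kinv a) s.
Proof. by move=> ha hb h; have := FKi ha hb; rewrite cw_nb // invrK. Qed.
Lemma FKi_far a b : (1 <= a <= ell)%N -> (1 <= b <= ell)%N ->
  ((a.+1 < b) || (b.+1 < a))%N -> comm_w (F b) (Kinv a) 1.
Proof. by move=> ha hb h; have := FKi ha hb; rewrite cw_far // invr1. Qed.
Lemma FK_nb a b : (1 <= a <= ell)%N -> (1 <= b <= ell)%N ->
  ((a == b.+1) || (b == a.+1))%N -> comm_w (F b) (K a) s^-1.
Proof. by move=> ha hb h; have := FK ha hb; rewrite cw_nb. Qed.
Lemma FK_far a b : (1 <= a <= ell)%N -> (1 <= b <= ell)%N ->
  ((a.+1 < b) || (b.+1 < a))%N -> comm_w (F b) (K a) 1.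
Proof. by move=> ha hb h; have := FK ha hb; rewrite cw_far. Qed.

Lemma G0 j : G j j = F j.
Proof. by rewrite /Mel subnn. Qed.

Lemma Grec j k : (j < k)%N -> G j k = qcomm q (G j.+1 k) (F j).
Proof.
move=> h; rewrite /Mel.
have -> : (k - j = (k - j.+1).+1)%N by lia.
by rewrite /= st_qcomm.
Qed.

Lemma G_commw y j k (w : nat -> R) : (j <= k)%N ->
  (forall b, (j <= b <= k)%N -> comm_w y (F b) (w b)) ->
  comm_w y (G j k) (\prod_(j <= b < k.+1) w b).
Proof.
move=> hjk; move Hn : (k - j)%N => n.
elim: n j Hn hjk => [|n IH] j Hn hjk H.
  have -> : k = j by lia.
  by rewrite G0 big_nat1; apply: H; lia.
rewrite Grec; last by lia.
rewrite big_ltn; last by lia.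
rewrite mulrC; apply: comm_w_qcomm; last by apply: H; lia.
apply: IH; [lia|lia|]. move=> b hb; apply: H; lia.
Qed.

Lemma G_single y j k b0 c : (j <= b0 <= k)%N -> comm_w y (F b0) c ->
  (forall b, (j <= b <= k)%N -> b != b0 -> comm_w y (F b) 1) ->
  comm_w y (G j k) c.
Proof.
move=> h H0 H; rewrite -(@prod_single _ c j k.+1 b0); last by lia.
apply: G_commw; first by lia.
by move=> b hb; case: eqP => [->//|/eqP ne]; apply: H.
Qed.

Lemma G_comm1 y j k : (j <= k)%N ->
  (forall b, (j <= b <= k)%N -> comm_w y (F b) 1) -> comm_w y (G j k) 1.
Proof.
move=> h H; have := G_commw (w := fun _ => 1) h H.
by rewrite big1_eq.
Qed.


Lemma W1 j k : (1 <= j)%N -> (j < k <= ell)%N -> comm_w (Kinv j) (G j.+1 k) s^-1.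
Proof.
move=> h1 h2; apply: (G_single (b0 := j.+1)); first by lia.
  apply: KiF_nb; lia.
move=> b hb hne; apply: KiF_far; lia.
Qed.

Lemma W2 j n : (1 <= j)%N -> (j.+1 < n <= ell.+1)%N -> comm_w (F j) (PK j.+1 n) s^-1.
Proof.
move=> h1 h2; apply: (prodw_single_r (b0 := j.+1)); first by lia.
  apply: FK_nb; lia.
move=> b hb hne; apply: FK_far; lia.
Qed.

Lemma W3 j n : (1 <= j)%N -> (j.+1 < n <= ell.+1)%N -> comm_w (F j) (PKi j.+1 n) s.
Proof.
move=> h1 h2; apply: (prodw_single_r (b0 := j.+1)); first by lia.
  apply: FKi_nb; lia.
move=> b hb hne; apply: FKi_far; lia.
Qed.

Lemma W4 j k : (1 <= j)%N -> (j < k <= ell)%N -> comm_w (K j) (G j.+1 k) s.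
Proof.
move=> h1 h2; apply: (G_single (b0 := j.+1)); first by lia.
  apply: KF_nb; lia.
move=> b hb hne; apply: KF_far; lia.
Qed.

Lemma W5 j m k : (1 <= j)%N -> (j.+1 < m <= k)%N -> (k <= ell)%N ->
  comm_w (F j) (G m k) 1.
Proof.
move=> h1 h2 h3; apply: G_comm1; first by lia.
move=> b hb; apply/comm_w1/FF; lia.
Qed.

Lemma W6 j m k : (1 <= j)%N -> (j.+1 < m <= k)%N -> (k <= ell)%N ->
  comm_w (Kinv j) (G m k) 1.
Proof.
move=> h1 h2 h3; apply: G_comm1; first by lia.
move=> b hb; apply: KiF_far; lia.
Qed.

Lemma W6' j m k : (1 <= j)%N -> (j.+1 < m <= k)%N -> (k <= ell)%N ->
  comm_w (K j) (G m k) 1.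
Proof.
move=> h1 h2 h3; apply: G_comm1; first by lia.
move=> b hb; apply: KF_far; lia.
Qed.

Lemma W7 i m : (1 <= i <= m)%N -> (m < ell)%N ->
  comm_w (PKi i m.+1) (G m.+1 ell) s^-1.
Proof.
move=> h1 h2; apply: (prodw_single_l (b0 := m)); first by lia.
  apply: W1; lia.
move=> b hb hne; apply: W6; lia.
Qed.

Lemma W8 i m : (1 <= i <= m)%N -> (m < ell)%N ->
  comm_w (PK m.+1 ell.+1) (G i m) s.
Proof.
move=> h1 h2; apply: (prodw_single_l (b0 := m.+1)); first by lia.
  apply: (G_single (b0 := m)); first by lia.
    apply: KF_nb; lia.
  move=> b hb hne; apply: KF_far; lia.
move=> b hb hne; apply: G_comm1; first by lia.
move=> c hc; apply: KF_far; lia.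
Qed.

Lemma W9 i m : (1 <= i <= m)%N -> (m < ell)%N -> GRing.comm hatKinv (G i m).
Proof.
move=> h1 h2; apply/comm_w1; apply: G_comm1; first by lia.
move=> b hb; apply/comm_w1/hKiF; lia.
Qed.

Lemma cKPK a n1 n2 : (1 <= a <= ell)%N -> (1 <= n1)%N -> (n2 <= ell.+1)%N ->
  GRing.comm (K a) (PK n1 n2).
Proof. move=> ha h1 h2; apply: comm_w_prod_r => b hb; apply: Kc; lia. Qed.
Lemma cKPKi a n1 n2 : (1 <= a <= ell)%N -> (1 <= n1)%N -> (n2 <= ell.+1)%N ->
  GRing.comm (K a) (PKi n1 n2).
Proof. move=> ha h1 h2; apply: comm_w_prod_r => b hb; apply: KKic; lia. Qed.
Lemma cKiPK a n1 n2 : (1 <= a <= ell)%N -> (1 <= n1)%N -> (n2 <= ell.+1)%N ->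
  GRing.comm (Kinv a) (PK n1 n2).
Proof. move=> ha h1 h2; apply: comm_w_prod_r => b hb; apply: KiKc; lia. Qed.
Lemma cKiPKi a n1 n2 : (1 <= a <= ell)%N -> (1 <= n1)%N -> (n2 <= ell.+1)%N ->
  GRing.comm (Kinv a) (PKi n1 n2).
Proof. move=> ha h1 h2; apply: comm_w_prod_r => b hb; apply: Kic; lia. Qed.
Lemma cPKPKi a1 a2 n1 n2 : (1 <= a1)%N -> (a2 <= ell.+1)%N -> (1 <= n1)%N -> (n2 <= ell.+1)%N ->
  GRing.comm (PK a1 a2) (PKi n1 n2).
Proof. move=> ha h1 h2 h3; apply: comm_w_prod_l => b hb; apply: cKPKi; lia. Qed.
Lemma chKiPK n1 n2 : (1 <= n1)%N -> (n2 <= ell.+1)%N -> GRing.comm hatKinv (PK n1 n2).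
Proof. move=> h1 h2; apply: comm_w_prod_r => b hb; apply: hKiKc; lia. Qed.
Lemma chKiPKi n1 n2 : (1 <= n1)%N -> (n2 <= ell.+1)%N -> GRing.comm hatKinv (PKi n1 n2).
Proof. move=> h1 h2; apply: comm_w_prod_r => b hb; apply: hKiKic; lia. Qed.
Lemma cPKF n1 n2 b : (1 <= b <= ell)%N -> (b.+1 < n1)%N -> (n2 <= ell.+1)%N ->
  GRing.comm (PK n1 n2) (F b).
Proof. move=> hb h1 h2; apply: comm_w_prod_l => a ha; apply/comm_w1/KF_far; lia. Qed.

Lemma PPi a b : (1 <= a)%N -> (b <= ell.+1)%N -> PK a b * PKi a b = 1.
Proof.
move=> ha; elim: b => [|b IH] hb; first by rewrite !big_geq ?mulr1.
case: (ltnP b a) => hab.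
  by rewrite !big_geq ?mulr1.
rewrite !big_nat_recr /=; [|lia|lia].
rewrite -mulrA (mulrA (K b)) (cKPKi (n1:=a) (n2:=b)); [|lia|lia|lia].
by rewrite -mulrA mulrA IH ?mul1r ?KKi //; lia.
Qed.


Lemma coef1 : 1 - q^-1 * (s^-1 * s^-1) = s^-1 * (q - q^-1) * s^-1.
Proof.
have H : forall t : R, t != 0 ->
  1 - (t * t)^-1 * (t^-1 * t^-1) = t^-1 * (t * t - (t * t)^-1) * t^-1.
  by move=> t ht; field.
by have := H _ s_neq0; rewrite ss.
Qed.
Lemma coef0 : 1 - q^-1 * (s * s) = 0.
Proof. by rewrite ss mulVf ?subrr // q_neq0. Qed.
Lemma coef0' : 1 - q^-1 * ((1 * s) * (s * 1)) = 0.
Proof. by rewrite mul1r mulr1 coef0. Qed.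

Lemma tens_prod (f g : nat -> A) (r : seq nat) :
  \prod_(i <- r) tens (f i) (g i) = tens (\prod_(i <- r) f i) (\prod_(i <- r) g i).
Proof.
elim: r => [|x r IH]; first by rewrite !big_nil; case: Ht.
by rewrite !big_cons IH (tensM Ht).
Qed.

Lemma D_inv x x' : Delta x = tens x x -> x * x' = 1 -> x' * x = 1 ->
  Delta x' = tens x' x'.
Proof.
move=> Hx H1 H2.
have H3 : tens x x * tens x' x' = 1 by rewrite (tensM Ht) H1; case: Ht.
by rewrite -[Delta x']mulr1 -H3 mulrA -Hx -rmorphM H2 rmorph1 mul1r.
Qed.

Lemma DK a : (1 <= a <= ell)%N -> Delta (K a) = tens (K a) (K a).
Proof. by case: HD => _ H _ _ _ /H. Qed.
Lemma DKi a : (1 <= a <= ell)%N -> Delta (Kinv a) = tens (Kinv a) (Kinv a).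
Proof. move=> ha; exact: (D_inv (DK ha) (KKi ha) (KiK ha)). Qed.
Lemma DhKi : Delta hatKinv = tens hatKinv hatKinv.
Proof. by apply: (D_inv _ hKKi hKiK); case: HD. Qed.
Lemma DF b : (1 <= b <= ell)%N -> Delta (F b) = tens (F b) (K b) + tens (Kinv b) (F b).
Proof. by case: HD => _ _ _ _ /(_ b) H /H. Qed.
Lemma DPK n1 n2 : (1 <= n1)%N -> (n2 <= ell.+1)%N -> Delta (PK n1 n2) = tens (PK n1 n2) (PK n1 n2).
Proof.
move=> h1 h2; rewrite rmorph_prod (eq_big_nat _ _ (F2 := fun m => tens (K m) (K m))).
  by rewrite tens_prod.
move=> m hm; apply: DK; lia.
Qed.
Lemma DPKi n1 n2 : (1 <= n1)%N -> (n2 <= ell.+1)%N -> Delta (PKi n1 n2) = tens (PKi n1 n2) (PKi n1 n2).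
Proof.
move=> h1 h2; rewrite rmorph_prod (eq_big_nat _ _ (F2 := fun m => tens (Kinv m) (Kinv m))).
  by rewrite tens_prod.
move=> m hm; apply: DKi; lia.
Qed.

Lemma D_qcomm a b : Delta (qcomm q a b) = qcomm q (Delta a) (Delta b).
Proof. by rewrite /qcomm rmorphB; case: HD => -> _ _ _ _; rewrite !rmorphM. Qed.

Lemma qcomm_mulr (x y z : A) : GRing.comm y z -> qcomm q (x * y) z = qcomm q x z * y.
Proof. by move=> H; rewrite /qcomm mulrBl -scalerAl -!mulrA H. Qed.


Local Notation c := ((Num.sqrt q)^-1 * (q - q^-1)).

Lemma DeltaG j k : (1 <= j)%N -> (j <= k <= ell)%N ->
  Delta (G j k) = tens (G j k) (PK j k.+1) + tens (PKi j k.+1) (G j k)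
   + c *: \sum_(j <= m < k) tens (G m.+1 k * PKi j m.+1) (G j m * PK m.+1 k.+1).
Proof.
move=> hj hjk; move Hn : (k - j)%N => n.
elim: n j Hn hj hjk => [|n IH] j Hn hj hjk.
  have ek : k = j by lia.
  subst k; rewrite G0 DF; last by lia.
  by rewrite !big_nat1 big_geq // scaler0 addr0.
have hjk' : (j < k)%N by lia.
rewrite {1}Grec // D_qcomm (IH j.+1) ?DF; [|lia|lia|lia|lia].
set G' := G j.+1 k.
set T1 := tens G' _. set T2 := tens _ G'. set S := \sum_(_ <= _ < _) _.
have A1 : qcomm q T1 (tens (F j) (K j)) = tens (G j k) (PK j k.+1).
  rewrite (qcB_L1 q Ht); last by rewrite (cKPK (a:=j)) //; lia.
  rewrite -Grec // (big_ltn (m:=j)); last by lia.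
  by rewrite (cKPK (a:=j)) //; lia.
have A2 : qcomm q T1 (tens (Kinv j) (F j)) =
    c *: tens (G j.+1 k * PKi j j.+1) (G j j * PK j.+1 k.+1).
  have w1 : comm_w (Kinv j) G' s^-1 by apply: W1; lia.
  have w2 : comm_w (F j) (PK j.+1 k.+1) s^-1 by apply: W2; lia.
  rewrite (qcB_L3 q Ht w1 w2) big_nat1 G0 w2 (tensZ2 Ht) scalerA coef1 //.
have A3 : qcomm q T2 (tens (F j) (K j)) = 0.
  have w1 : comm_w (F j) (PKi j.+1 k.+1) s by apply: W3; lia.
  have w2 : comm_w (K j) G' s by apply: W4; lia.
  by rewrite (qcB_L3 q Ht w1 w2) coef0 scale0r.
have A4 : qcomm q T2 (tens (Kinv j) (F j)) = tens (PKi j k.+1) (G j k).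
  rewrite (qcB_L2 q Ht); last by rewrite (cKiPKi (a:=j)) //; lia.
  rewrite -Grec // (big_ltn (m:=j)); last by lia.
  by rewrite (cKiPKi (a:=j)) //; lia.
have AS : qcomm q S (tens (F j) (K j) + tens (Kinv j) (F j)) =
   \sum_(j.+1 <= m < k) tens (G m.+1 k * PKi j m.+1) (G j m * PK m.+1 k.+1).
  rewrite qc_suml; apply: eq_big_nat => m hm.
  rewrite qc_addr.
  have w1 : comm_w (F j) (G m.+1 k * PKi j.+1 m.+1) (1 * s).
    apply: comm_w_mul; [apply: W5|apply: W3]; lia.
  have w2 : comm_w (K j) (G j.+1 m * PK m.+1 k.+1) (s * 1).
    apply: comm_w_mul; [apply: W4; lia|apply/comm_w1/cKPK; lia].
  rewrite (qcB_L3 q Ht w1 w2) coef0' scale0r add0r.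
  rewrite (qcB_L2 q Ht); last first.
    apply: commrM; first by apply/comm_w1/W6; lia.
    by apply: cKiPKi; lia.
  rewrite qcomm_mulr; last by apply: cPKF; lia.
  rewrite -Grec; last by lia.
  rewrite -mulrA (big_ltn (m:=j) (n:=m.+1)); last by lia.
  by rewrite (cKiPKi (a:=j)) //; lia.
rewrite qc_addl qc_scalel AS !qc_addl !qc_addr A1 A2 A3 A4 add0r.
rewrite (big_ltn (m:=j) (n:=k)) // scalerDr.
by rewrite (addrAC (tens (G j k) _)) -[LHS]addrA.
Qed.


Lemma PK_split a b d : (a <= b)%N -> (b <= d)%N -> PK a d = PK a b * PK b d.
Proof. by move=> h1 h2; rewrite (big_cat_nat _ (n:=b)). Qed.

Lemma final i : (1 <= i <= ell)%N ->
    Delta (Xel st E K hatKinv q ell i) =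
      tens (Xel st E K hatKinv q ell i) (Nel K hatKinv ell i i.-1)
      + tens hatKinv (Xel st E K hatKinv q ell i)
      + c *:
          \sum_(i <= j < ell)
             tens (Xel st E K hatKinv q ell j.+1)
                  (Nel K hatKinv ell i j * st (Mel E q i j)).
Proof.
move=> hi.
have eN : PK ell.+1 ell.+1 = 1 by rewrite big_geq.
rewrite /Xel {1}/Nel rmorphM !rmorphM DPK ?DPK ?DhKi; [|lia|lia|lia|lia].
rewrite !(tensM Ht) DeltaG; [|lia|lia].
rewrite !mulrDr -scalerAr mulr_sumr !(tensM Ht).
set N := PK i ell.+1 * PK ell.+1 ell.+1 * hatKinv.
have e1 : N * PK i ell.+1 = Nel K hatKinv ell i i.-1.
  rewrite /N /Nel prednK; last by lia.
  by rewrite eN mulr1 -mulrA (chKiPK (n1:=i)) ?mulrA //; lia.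
have e2 : N * PKi i ell.+1 = hatKinv.
  rewrite /N eN mulr1 -mulrA (chKiPKi (n1:=i)); [|lia|lia].
  by rewrite mulrA PPi ?mul1r //; lia.
rewrite e1 e2; congr (_ + _ + _ *: _).
apply: eq_big_nat => m hm.
have e3 : N * (G m.+1 ell * PKi i m.+1) = s *: (Nel K hatKinv ell m.+1 ell * G m.+1 ell).
  have w : comm_w (G m.+1 ell) (PKi i m.+1) s.
    rewrite -[s]invrK; apply: comm_w_sym; first by rewrite invr_eq0 s_neq0.
    apply: W7; lia.
  rewrite w -scalerAr /N /Nel eN !mulr1; congr (_ *: _).
  rewrite (PK_split (b:=m.+1)); [|lia|lia].
  set x := PK m.+1 ell.+1 * hatKinv.
  have cx : GRing.comm x (PKi i m.+1).
    apply: commr_sym; apply: commrM; apply: commr_sym.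
      by apply: cPKPKi; lia.
    by apply: chKiPKi; lia.
  rewrite -(mulrA (PK i m.+1)) -/x mulrA -(mulrA (PK i m.+1) x) cx mulrA PPi ?mul1r //; lia.
have e4 : N * (G i m * PK m.+1 ell.+1) = s^-1 *: (Nel K hatKinv ell i m * G i m).
  have w : comm_w (G i m) (PK m.+1 ell.+1) s^-1.
    apply: comm_w_sym; first by rewrite s_neq0.
    apply: W8; lia.
  rewrite w -scalerAr /N /Nel eN !mulr1; congr (_ *: _).
  rewrite mulrA -(mulrA (PK i ell.+1) hatKinv) (chKiPK (n1:=m.+1)) ?mulrA //; lia.
rewrite (tensM Ht).
rewrite e3 e4 (tensZ1 Ht) (tensZ2 Ht) scalerA mulfV ?scale1r //; exact: s_neq0.
Qed.

End Main.

Theorem lemma3p15 (R : rcfType) (A B : algType R) (q : R) (ell : nat)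
  (st : A -> A) (K Kinv E : nat -> A) (hatK hatKinv : A)
  (tens : A -> A -> B) (Delta : {rmorphism A -> B}) :
  0 < q -> q < 1 -> (1 <= ell)%N ->
  is_star st ->
  Uq_relations st q ell K Kinv E hatK hatKinv ->
  hatK_relations st q ell K Kinv E hatK hatKinv ->
  is_tensor_map tens ->
  is_coproduct st ell tens Delta K Kinv E hatK ->
  forall i : nat, (1 <= i <= ell)%N ->
    Delta (Xel st E K hatKinv q ell i) =
      tens (Xel st E K hatKinv q ell i) (Nel K hatKinv ell i i.-1)
      + tens hatKinv (Xel st E K hatKinv q ell i)
      + ((Num.sqrt q)^-1 * (q - q^-1)) *:
          \sum_(i <= j < ell)
             tens (Xel st E K hatKinv q ell j.+1)
                  (Nel K hatKinv ell i j * st (Mel E q i j)).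
Proof.
move=> hq0 hq1 hl Hst HU HH Ht HD i hi.
exact: (final hq0 hq1 hl Hst HU HH Ht HD hi).
Qed.
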